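(* In the protocol with double clipping, fix the graph $G$, a user $v_i$, a value $\tilde d_i>0$ of her noisy degree, and an index $j<i$ with $a_{i,j}=1$ in her clipped neighbor list (so that her clipped list has at most $\tilde d_i$ ones among indices $<i$), and let $\kappa_i\in[\mu^*\tilde d_i,\tilde d_i]$. Then, with probability taken over the first-round randomness, $$\Pr(t_{i,j}>\kappa_i)\le\exp\!\Big[-\tilde d_i\,D\big(\tfrac{\kappa_i}{\tilde d_i}\,\big\|\,\mu\big)\Big]\ \text{(variant F)},\qquad \Pr(t_{i,j}>\kappa_i)\le\exp\!\Big[-\tilde d_i\,D\big(\tfrac{\kappa_i}{\tilde d_i}\,\big\|\,\mu^2\big)\Big]\ \text{(variant O)},$$ $$\Pr(t_{i,j}>\kappa_i)\le\mu\exp\!\Big[-\tilde d_i\,D\big(\tfrac{\max\{\kappa_i,\mu^2\tilde d_i\}}{\tilde d_i}\,\big\|\,\mu^2\big)\Big]\ \text{(variant T)}.$$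
   Context: $D(p_1\|p_2)=p_1\log\frac{p_1}{p_2}+(1-p_1)\log\frac{1-p_1}{1-p_2}$ is the KL divergence between Bernoulli distributions. $ARR_{\epsilon,\mu}:\{0,1\}\to\{0,1\}$ satisfies $\Pr[ARR_{\epsilon,\mu}(1)=1]=\mu$, $\Pr[ARR_{\epsilon,\mu}(0)=1]=\mu e^{-\epsilon}$, with $\mu\in(0,\frac{e^{\epsilon_1}}{e^{\epsilon_1}+1}]$. Round 1: each $v_\ell$ computes $r_{\ell,m}=ARR_{\epsilon_1,\mu}(a_{\ell,m})$ for all $m<\ell$ (all independent, using the original adjacency matrix); $E'=\{\{v_m,v_\ell\}:m<\ell,r_{\ell,m}=1\}$. $\mu^*=\mu,\mu^2,\mu^3$ and $M_i=\{\{v_j,v_k\}\in E':j<k<i\}$, $\{\{v_j,v_k\}\in E':\{v_i,v_k\}\in E',j<k<i\}$, $\{\{v_j,v_k\}\in E':\{v_i,v_j\}\in E',\{v_i,v_k\}\in E',j<k<i\}$ in variants F, O, T respectively. The noisy degree $\tilde d_i$ is computed in round 2 with randomness independent of round 1, and $v_i$'s neighbor list is clipped (by removing ones) so that at most $\tilde d_i$ entries $a_{i,m}$, $m<i$, equal 1. Then $t_{i,j}=|\{k:j<k<i,a_{i,k}=1,\{v_j,v_k\}\in M_i\}|$ with $a_{i,k}$ from the clipped list. *)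

(* Defs.v *)
From HB Require Import structures.
From mathcomp Require Import all_boot all_order all_algebra.
From mathcomp Require Import all_classical all_reals all_analysis.
Set Implicit Arguments. Unset Strict Implicit. Unset Printing Implicit Defensive.
Import Order.TTheory GRing.Theory Num.Theory.
Local Open Scope ring_scope.

(* Users are v_0, ..., v_(n-1), indexed by 'I_n; the index order is the
   order on naturals. *)

(* KL divergence between Bernoulli distributions (ln 0 = 0 in MathComp,
   giving the usual convention 0 log 0 = 0). *)
Definition klB (R : realType) (p1 p2 : R) : R :=
  p1 * ln (p1 / p2) + (1 - p1) * ln ((1 - p1) / (1 - p2)).

(* Pr[ARR_{eps,mu}(b) = 1] *)
Definition arr_prob (R : realType) (eps mu : R) (b : bool) : R :=
  if b then mu else mu * expR (- eps).

Definition bern (R : realType) (q : R) (x : bool) : R :=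
  if x then q else 1 - q.

(* First-round randomness: r (l, m) = r_{l,m} for m < l.  All these bits are
   independent, r_{l,m} = ARR_{eps,mu}(a_{l,m}); coordinates (l, m) with
   ~ (m < l) are unused and fixed to false. *)
Definition round1_weight (R : realType) (n : nat) (a : 'I_n -> 'I_n -> bool)
  (eps mu : R) (r : {ffun 'I_n * 'I_n -> bool}) : R :=
  \prod_(p : 'I_n * 'I_n)
     (if (p.2 < p.1)%N then bern (arr_prob eps mu (a p.1 p.2)) (r p)
      else (if r p then 0 else 1)).

Definition round1_Pr (R : realType) (n : nat) (a : 'I_n -> 'I_n -> bool)
  (eps mu : R) (E : pred {ffun 'I_n * 'I_n -> bool}) : R :=
  \sum_(r | E r) round1_weight a eps mu r.

Definition inE' (n : nat) (r : {ffun 'I_n * 'I_n -> bool}) (x y : 'I_n) : bool :=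
  if (x < y)%N then r (y, x) else if (y < x)%N then r (x, y) else false.

Inductive variant := VarF | VarO | VarT.

Definition inM (n : nat) (var : variant) (r : {ffun 'I_n * 'I_n -> bool})
  (i j k : 'I_n) : bool :=
  [&& (j < k)%N, (k < i)%N, inE' r j k &
   match var with
   | VarF => true
   | VarO => inE' r i k
   | VarT => inE' r i j && inE' r i k
   end].

(* t_{i,j}, where ac is v_i's clipped neighbor list (ac m = a_{i,m}) *)
Definition t_ij (n : nat) (var : variant) (r : {ffun 'I_n * 'I_n -> bool})
  (ac : 'I_n -> bool) (i j : 'I_n) : nat :=
  #|[set k : 'I_n | [&& (j < k)%N, (k < i)%N, ac k & inM var r i j k]]|.

Definition mu_star (R : realType) (var : variant) (mu : R) : R :=
  match var with VarF => mu | VarO => mu ^+ 2 | VarT => mu ^+ 3 end.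

Definition tail_bound (R : realType) (var : variant) (mu d kappa : R) : R :=
  match var with
  | VarF => expR (- (d * klB (kappa / d) mu))
  | VarO => expR (- (d * klB (kappa / d) (mu ^+ 2)))
  | VarT => mu * expR (- (d * klB (Num.max kappa (mu ^+ 2 * d) / d) (mu ^+ 2)))
  end.

(* Main.v *)
From mathcomp Require Import all_boot all_order all_algebra.
From mathcomp Require Import all_classical all_reals all_analysis.
From mathcomp Require Import ring lra.
Require Import Defs.
Set Implicit Arguments. Unset Strict Implicit. Unset Printing Implicit Defensive.
Import Order.TTheory GRing.Theory Num.Theory.
Local Open Scope ring_scope.

Lemma E_prod (R : realType) (I : finType) (f h : I -> bool -> R) :
  \sum_(r : {ffun I -> bool}) ((\prod_p f p (r p)) * (\prod_p h p (r p))) =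
  \prod_p (f p true * h p true + f p false * h p false).
Proof.
transitivity (\prod_p \sum_(b : bool) f p b * h p b); last first.
  by apply: eq_bigr => p _; rewrite big_bool.
rewrite bigA_distr_bigA; apply: eq_bigr => r _; by rewrite -big_split.
Qed.

Lemma prod_col (R : realType) n (j : 'I_n) (P : pred 'I_n) (Phi : 'I_n * 'I_n -> R) :
  \prod_(p : 'I_n * 'I_n) (if (p.2 == j) && P p.1 then Phi p else 1) =
  \prod_(k : 'I_n) (if P k then Phi (k, j) else 1).
Proof.
transitivity (\prod_(p : 'I_n * 'I_n)
   (fun l m => if (m == j) && P l then Phi (l, m) else 1) p.1 p.2).
  by apply: eq_bigr => -[].
rewrite -(pair_bigA _ (fun l m => if (m == j) && P l then Phi (l, m) else 1)); apply: eq_bigr => l _.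
rewrite (bigD1 j) //= eqxx /= big1 ?mulr1 // => m /negbTE -> //.
Qed.

Lemma prod_single (R : realType) (I : finType) (q : I) (b : bool) (Phi : I -> R) :
  \prod_(p : I) (if (p == q) && b then Phi p else 1) = if b then Phi q else 1.
Proof.
rewrite (bigD1 q) //= eqxx /= big1 ?mulr1 // => p /negbTE -> //.
Qed.

Lemma prod_row (R : realType) n (i : 'I_n) (P : pred 'I_n) (Phi : 'I_n * 'I_n -> R) :
  \prod_(p : 'I_n * 'I_n) (if (p.1 == i) && P p.2 then Phi p else 1) =
  \prod_(k : 'I_n) (if P k then Phi (i, k) else 1).
Proof.
transitivity (\prod_(p : 'I_n * 'I_n)
   (fun l m => if (l == i) && P m then Phi (l, m) else 1) p.1 p.2).
  by apply: eq_bigr => -[].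
rewrite -(pair_bigA _ (fun l m => if (l == i) && P m then Phi (l, m) else 1)).
transitivity (\prod_(l : 'I_n) (if (l == i) && true then
   \prod_(m : 'I_n) (if P m then Phi (i, m) else 1) else 1)); last first.
  by rewrite prod_single.
apply: eq_bigr => l _; case: eqP => [->|_] /=.
  by [].
by apply: big1.
Qed.

Lemma disj3 (R : realType) (c1 c2 c3 : bool) (v : R) :
  ~~ (c1 && c2) -> ~~ (c1 && c3) -> ~~ (c2 && c3) ->
  (if c1 then v else 1) * (if c2 then v else 1) * (if c3 then v else 1) =
  if c1 || c2 || c3 then v else 1.
Proof. by case: c1; case: c2; case: c3 => //= _ _ _; rewrite ?mulr1 ?mul1r. Qed.

Lemma Ebound (R : realType) n (f : 'I_n * 'I_n -> bool -> R)
  (f_sum : forall p, f p true + f p false = 1) (f_ge0 : forall p b, 0 <= f p b)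
  (i j : 'I_n) (K : pred 'I_n) (HK : forall k, K k -> (j < k)%N && (k < i)%N)
  (eO eT : bool) (x p0 mu : R) (x_ge1 : 1 <= x)
  (hK : forall k, K k -> f (k,j) true * (if eO then f (i,k) true else 1) <= p0)
  (hT : eT -> f (i,j) true <= mu) :
  \sum_(r : {ffun 'I_n * 'I_n -> bool}) (\prod_p f p (r p)) *
     ((if eT then (r (i,j))%:R else 1) *
      x ^+ #|[set k | K k && r (k,j) && (eO ==> r (i,k))]|)
  <= (if eT then mu else 1) * (1 + (x - 1) * p0) ^+ #|[set k | K k]|.
Proof.
set c := x - 1.
have c_ge0 : 0 <= c by rewrite subr_ge0.
have HKi : K i = false by apply/negbTE/negP => /HK/andP[_]; rewrite ltnn.
have HKj : K j = false by apply/negbTE/negP => /HK/andP[]; rewrite ltnn.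
pose z := fun (r : {ffun 'I_n * 'I_n -> bool}) k =>
  if K k && r (k,j) && (eO ==> r (i,k)) then c else 0.
have Hx : forall r : {ffun 'I_n * 'I_n -> bool},
    x ^+ #|[set k | K k && r (k,j) && (eO ==> r (i,k))]| =
    \sum_(s : {ffun 'I_n -> bool}) \prod_k (if s k then z r k else 1).
  move=> r; rewrite -prodr_const big_mkcond /=
    -(bigA_distr_bigA (fun k (b : bool) => if b then z r k else 1)).
  apply: eq_bigr => k _; rewrite big_bool /= inE /z.
  by case: (_ && _ && _); rewrite ?add0r // /c subrK.
under eq_bigr => r _ do rewrite Hx !mulr_sumr.
rewrite exchange_big /=.
have -> : (1 + c * p0) ^+ #|[set k | K k]| =
    \sum_(s : {ffun 'I_n -> bool})
      \prod_k (if s k then (if K k then c * p0 else 0) else 1).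
  rewrite -prodr_const big_mkcond /=
    -(bigA_distr_bigA (fun k (b : bool) => if b then (if K k then c * p0 else 0) else 1)).
  apply: eq_bigr => k _; rewrite big_bool /= inE.
  by case: (K k); rewrite ?add0r // addrC.
rewrite mulr_sumr; apply: ler_sum => s _.
pose C := fun k => if s k then (if K k then c else 0) else 1.
pose c1 := fun p : 'I_n * 'I_n => (p == (i,j)) && eT.
pose c2 := fun p : 'I_n * 'I_n => (p.2 == j) && (s p.1 && K p.1).
pose c3 := fun p : 'I_n * 'I_n => (p.1 == i) && (s p.2 && K p.2 && eO).
have Hdisj : forall p, [/\ ~~ (c1 p && c2 p), ~~ (c1 p && c3 p) & ~~ (c2 p && c3 p)].
  move=> [l m]; rewrite /c1 /c2 /c3 /= xpair_eqE.
  have [->|Hl] := eqVneq l i; have [->|Hm] := eqVneq m j;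
    by rewrite ?eqxx ?(negbTE Hl) ?(negbTE Hm) ?HKi ?HKj /= ?andbF ?andFb.
have Hsplit : forall (v : 'I_n * 'I_n -> R),
    \prod_p (if c1 p || c2 p || c3 p then v p else 1) =
    (if eT then v (i,j) else 1) *
    \prod_k (if s k && K k then v (k,j) else 1) *
    \prod_k (if s k && K k && eO then v (i,k) else 1).
  move=> v.
  transitivity (\prod_p ((if c1 p then v p else 1) * (if c2 p then v p else 1)
                          * (if c3 p then v p else 1))).
    by apply: eq_bigr => p _; have [? ? ?] := Hdisj p; rewrite disj3.
  rewrite !big_split /= /c1 /c2 /c3 /=.
  by rewrite prod_single (prod_col j (fun k => s k && K k))
     (prod_row i (fun k => s k && K k && eO)).
have Hint : forall r : {ffun 'I_n * 'I_n -> bool},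
    (if eT then (r (i,j))%:R else 1) * \prod_k (if s k then z r k else 1) =
    \prod_k C k * \prod_p (if c1 p || c2 p || c3 p then (r p)%:R else 1).
  move=> r; rewrite Hsplit.
  have -> : \prod_k (if s k then z r k else 1) = \prod_k C k *
     (\prod_k (if s k && K k then (r (k,j))%:R else 1) *
      \prod_k (if s k && K k && eO then (r (i,k))%:R else 1)).
    rewrite -!big_split; apply: eq_bigr => k _ /=; rewrite /z /C.
    by case: (s k); case: (K k); case: (r (k,j)); case: (eO); case: (r (i,k));
       rewrite /= ?mulr1 ?mul1r ?mulr0 ?mul0r.
  by rewrite mulrCA !mulrA.
under eq_bigr => r _ do rewrite Hint mulrCA.
rewrite -mulr_sumr.
rewrite (E_prod f (fun p b => if c1 p || c2 p || c3 p then b%:R else 1)).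
have -> : \prod_p (f p true * (if c1 p || c2 p || c3 p then true%:R else 1) +
                   f p false * (if c1 p || c2 p || c3 p then false%:R else 1)) =
          \prod_p (if c1 p || c2 p || c3 p then f p true else 1).
  apply: eq_bigr => p _; case: (_ || _ || _) => /=.
    by rewrite mulr1 mulr0 addr0.
  by rewrite !mulr1 f_sum.
rewrite Hsplit mulrA mulrCA -mulrA -!big_split /=.
apply: ler_pM.
- by case: (eT).
- apply: prodr_ge0 => k _; rewrite /C.
  by case: (s k); case: (K k); case: (eO); rewrite /= ?mul1r ?mul0r ?mulr1 //
     ?mulr_ge0.
- by move: hT; case: (eT) => // /(_ isT).
apply: ler_prod => k _; rewrite /C.
case: (s k); case Kk: (K k) => /=; last 3 first.
- by rewrite !mul0r lexx.
- by rewrite !mul1r lexx ler01.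
- by rewrite !mul1r lexx ler01.
have := hK k Kk; case: (eO) => /= H; apply/andP; split.
- by rewrite mulr_ge0 // mulr_ge0.
- by rewrite -mulrA ler_wpM2l.
- by rewrite mulr1 mulr_ge0.
- by rewrite mulr1 ler_wpM2l // -[f _ _]mulr1.
Qed.

Lemma chern_num (R : realType) (p0 q d : R) (N : nat) :
  0 < p0 -> p0 <= q -> q < 1 -> 0 < d -> (N%:R <= d) ->
  1 <= q * (1 - p0) / (p0 * (1 - q)) /\
  expR (- (q * d) * ln (q * (1 - p0) / (p0 * (1 - q)))) *
    (1 + (q * (1 - p0) / (p0 * (1 - q)) - 1) * p0) ^+ N
  <= expR (- (d * klB q p0)).
Proof.
move=> p0_gt0 p0q q1 d_gt0 Nd.
have q_gt0 : 0 < q by apply: lt_le_trans p0q.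
have hq1 : 0 < 1 - q by rewrite subr_gt0.
have hp1 : 0 < 1 - p0 by rewrite subr_gt0; apply: le_lt_trans q1.
have p0n : p0 != 0 by rewrite gt_eqF.
have q1n : 1 - q != 0 by rewrite gt_eqF.
have p1n : 1 - p0 != 0 by rewrite gt_eqF.
set y := (1 - p0) / (1 - q).
have y_gt0 : 0 < y by rewrite divr_gt0.
have y_ge1 : 1 <= y by rewrite ler_pdivlMr // mul1r; lra.
have qp_gt0 : 0 < q / p0 by rewrite divr_gt0.
have qp_ge1 : 1 <= q / p0 by rewrite ler_pdivlMr // mul1r.
have Hx : q * (1 - p0) / (p0 * (1 - q)) = (q / p0) * y.
  by rewrite /y; field; rewrite p0n q1n.
have Hy : 1 + (q / p0 * y - 1) * p0 = y.
  by rewrite /y; field; rewrite p0n q1n.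
rewrite Hx Hy; split.
  by rewrite -[1]mulr1 ler_pM.
have -> : y ^+ N = expR (ln (y ^+ N)) by rewrite lnK // posrE exprn_gt0.
rewrite lnXn // -mulr_natl -expRD ler_expR.
rewrite lnM ?posrE //.
have -> : klB q p0 = q * ln (q / p0) + (1 - q) * (- ln y).
  by rewrite /klB -lnV ?posrE // /y invf_div.
have H : N%:R * ln y <= d * ln y by rewrite ler_wpM2r // ln_ge0.
rewrite -subr_ge0.
have -> : - (d * (q * ln (q / p0) + (1 - q) * - ln y)) -
   (- (q * d) * (ln (q / p0) + ln y) + N%:R * ln y) = d * ln y - N%:R * ln y.
  by ring.
by rewrite subr_ge0.
Qed.

Theorem theorem5p2 (R : realType) (n : nat) (a : 'I_n -> 'I_n -> bool)
  (a_sym : forall x y, a x y = a y x) (a_irr : forall x, a x x = false)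
  (eps mu : R) (eps_gt0 : 0 < eps) (mu_gt0 : 0 < mu)
  (mu_le : mu <= expR eps / (expR eps + 1))
  (i j : 'I_n) (d : R) (d_gt0 : 0 < d)
  (ac : 'I_n -> bool)
  (ac_clip : forall m : 'I_n, (m < i)%N -> ac m -> a i m)
  (ac_card : (#|[set m : 'I_n | (m < i)%N && ac m]|)%:R <= d)
  (j_lt_i : (j < i)%N) (ac_j : ac j)
  (var : variant) (kappa : R)
  (kappa_lo : mu_star var mu * d <= kappa) (kappa_hi : kappa <= d) :
  round1_Pr a eps mu (fun r => kappa < (t_ij var r ac i j)%:R)
    <= tail_bound var mu d kappa.
Proof.
pose f := fun (p : 'I_n * 'I_n) (b : bool) =>
  if (p.2 < p.1)%N then bern (arr_prob eps mu (a p.1 p.2)) b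
  else (if b then 0 else 1).
have mu1 : mu < 1.
  apply: le_lt_trans mu_le _.
  by rewrite ltr_pdivrMr ?mul1r ?ltrDl // addr_gt0 // expR_gt0.
have e_le1 : expR (- eps) <= 1 by rewrite expR_le1 oppr_le0 ltW.
have arr_le : forall b, arr_prob eps mu b <= mu.
  by rewrite /arr_prob; case=> //=; rewrite ger_pMr.
have arr_ge0 : forall b, 0 <= arr_prob eps mu b.
  by rewrite /arr_prob; case=> /=; [exact: ltW | rewrite mulr_ge0 ?expR_ge0 // ltW].
have f_sum : forall p, f p true + f p false = 1.
  by move=> p; rewrite /f; case: (_ < _)%N; rewrite /= ?add0r // addrC subrK.
have f_ge0 : forall p b, 0 <= f p b.
  move=> p b; rewrite /f; case: (_ < _)%N; case: b => //=.
  by rewrite subr_ge0 (le_trans (arr_le _)) // ltW.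
have f_le : forall p, f p true <= mu.
  by move=> p; rewrite /f; case: (_ < _)%N => //=; rewrite ltW.
have W : forall r, round1_weight a eps mu r = \prod_p f p (r p) by [].
pose K := fun k : 'I_n => [&& (j < k)%N, (k < i)%N & ac k].
have HK : forall k, K k -> (j < k)%N && (k < i)%N by move=> k /and3P[-> ->].
pose eO := if var is VarF then false else true.
pose eT := if var is VarT then true else false.
pose p0 := if var is VarF then mu else mu ^+ 2.
pose kap := if var is VarT then Num.max kappa (mu ^+ 2 * d) else kappa.
pose T0 := fun r : {ffun 'I_n * 'I_n -> bool} =>
  #|[set k | K k && r (k,j) && (eO ==> r (i,k))]|.
have Hcard : (#|[set k | K k]|)%:R <= d.
  apply: le_trans ac_card; rewrite ler_nat; apply: subset_leq_card.
  by apply/fintype.subsetP => k; rewrite !inE /K => /and3P[_ -> ->].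
have HT : forall r, t_ij var r ac i j =
   #|[set k | (~~ eT || r (i,j)) && (K k && r (k,j) && (eO ==> r (i,k)))]|.
  move=> r; apply: eq_card => k; rewrite !inE /inM /inE' /K.
  case jk : (j < k)%N; case ki : (k < i)%N; rewrite /= ?andbF //.
  rewrite (ltnNge i k) (ltnW ki) (ltnNge i j) (ltnW j_lt_i) /= j_lt_i.
  by rewrite /eT /eO; case: (var); case: (ac k); case: (r (k,j));
     case: (r (i,k)); case: (r (i,j)).
have Tle : forall r, (t_ij var r ac i j <= #|[set k | K k]|)%N.
  move=> r; rewrite HT; apply: subset_leq_card; apply/fintype.subsetP => k.
  by rewrite !inE => /andP[_ /andP[/andP[-> _] _]].
have mus_gt0 : 0 < mu_star var mu by case: (var); rewrite /= ?exprn_gt0.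
have kappa_gt0 : 0 < kappa by apply: lt_le_trans kappa_lo; rewrite mulr_gt0.
have tb_ge0 : 0 <= tail_bound var mu d kappa.
  by rewrite /tail_bound; case: (var); rewrite ?expR_ge0 // mulr_ge0 ?expR_ge0 ?ltW.
have [kd|kd] : kappa = d \/ kappa < d.
  by move: kappa_hi; rewrite le_eqVlt => /orP[/eqP ->|->]; [left|right].
  rewrite /round1_Pr big1 // => r Hr.
  have : (t_ij var r ac i j)%:R <= d by apply: le_trans Hcard; rewrite ler_nat Tle.
  by rewrite -kd leNgt Hr.
have kap_lt : kap < d.
  rewrite /kap; case: (var) => //; rewrite gt_max kd /=.
  have : mu ^+ 2 < 1 by rewrite expr2; nra.
  nra.
have kap_lo : p0 * d <= kap.
  by move: kappa_lo; rewrite /kap /p0; case: (var) => //= H; rewrite le_max lexx orbT.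
set q := kap / d.
have p0q : p0 <= q by rewrite /q ler_pdivlMr.
have q1 : q < 1 by rewrite /q ltr_pdivrMr ?mul1r.
have p0_gt0 : 0 < p0 by rewrite /p0; case: (var); rewrite ?exprn_gt0.
have [x_ge1 Hnum] := chern_num p0_gt0 p0q q1 d_gt0 Hcard.
set x := q * (1 - p0) / (p0 * (1 - q)) in x_ge1 Hnum.
have qd : q * d = kap by rewrite /q divfK // gt_eqF.
have alt0 : kap = kappa \/ q = p0.
  rewrite /q /kap /p0; case: (var); [left|left|] => //.
  rewrite maxEle; case: ifP => _; [right; by rewrite mulfK ?gt_eqF | by left].
have alt : kap = kappa \/ x = 1.
  case: alt0 => [->|Hq]; [by left|right].
  rewrite /x Hq divff // mulf_neq0 // gt_eqF // ?subr_gt0 //.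
  by apply: le_lt_trans q1.
have lnx : 0 <= ln x by rewrite ln_ge0.
have Hmk : round1_Pr a eps mu (fun r => kappa < (t_ij var r ac i j)%:R) <=
   (\sum_(r : {ffun 'I_n * 'I_n -> bool}) (\prod_p f p (r p)) *
      ((if eT then (r (i,j))%:R else 1) * x ^+ T0 r)) * expR (- (q * d) * ln x).
  rewrite /round1_Pr big_mkcond /= mulr_suml; apply: ler_sum => r _.
  have W0 : 0 <= \prod_p f p (r p) by apply: prodr_ge0.
  have E0 : 0 <= (if eT then (r (i,j))%:R else 1) by case: (eT); case: (r _).
  have X0 : 0 <= x ^+ T0 r by rewrite exprn_ge0 // (le_trans ler01).
  case: ifP => Hev; last by rewrite !mulr_ge0 ?expR_ge0.
  rewrite W -mulrA ler_peMr //.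
  rewrite HT in Hev.
  have Eq : (~~ eT || r (i,j)) = true.
    case E: (~~ eT || r (i,j)) => //; move: Hev; rewrite E.
    have -> : #|[set k : 'I_n | false && (K k && r (k,j) && (eO ==> r (i,k)))]| = 0%N.
      by apply: eq_card0 => k; rewrite inE.
    by rewrite ltNge (ltW kappa_gt0).
  rewrite Eq /= in Hev.
  have Er : (if eT then (r (i,j))%:R else 1) = 1 :> R.
    by move: Eq; case: (eT); case: (r (i,j)).
  rewrite Er mul1r.
  have -> : x ^+ T0 r = expR ((T0 r)%:R * ln x).
    by rewrite mulr_natl -lnXn ?lnK // ?posrE ?exprn_gt0 // (lt_le_trans ltr01).
  rewrite -expRD; apply: le_trans (expR_ge1Dx _); rewrite lerDl.
  rewrite mulNr -mulrBl qd; case: alt => [->|->]; last by rewrite ln1 mulr0.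
  by apply: mulr_ge0 => //; rewrite subr_ge0 ltW.
have hK : forall k, K k -> f (k,j) true * (if eO then f (i,k) true else 1) <= p0.
  move=> k _; rewrite /eO /p0; case: (var) => /=; first by rewrite mulr1; exact: f_le.
  1,2: by rewrite expr2 ler_pM ?f_ge0 ?f_le.
have HE := @Ebound R n f f_sum f_ge0 i j K HK eO eT x p0 mu x_ge1 hK (fun _ => f_le _).
apply: le_trans Hmk _.
apply: le_trans (ler_wpM2r (expR_ge0 _) HE) _.
rewrite -mulrA [X in _ * X]mulrC.
apply: le_trans (ler_wpM2l _ Hnum) _; first by case: (eT) => //; rewrite ltW.
by rewrite /eT /q /p0 /kap /tail_bound; case: (var); rewrite ?mul1r.
Qed.
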